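(* In the setting of the multi-position greedy algorithm (positions $1,\dots,L$, pairwise disjoint ray sets $V_l$ with $|V_l|\ge K$, vectors $\mathbf p_j\in[0,1]^V$, $\boldsymbol\epsilon\in[0,1]^V$, $E=\sum_i\epsilon_i$, greedy iterates with final cost $f^{LK}=\sum_i b^{LK}_i$), let $$\mathrm{OPT}=\min\Big\{\sum_{i=1}^V\prod_{j\in J}p_{ij}\ :\ J\subseteq V_1\cup\dots\cup V_L,\ |J\cap V_l|\le K\ \forall l\Big\}>0,$$ let $R_1,\dots,R_{L-1}\ge 0$, and put $\overline{\mathrm{OPT}}_u=\mathrm{OPT}+\sum_{v=1}^u R_v$ for $u=0,\dots,L-1$. Assume that for every $t\in\{0,\dots,LK-1\}$ the set $A_t$ of rays available before iteration $t+1$ contains a nonempty subset $S$ with $|S|\le LK$ and $\sum_i\prod_{j\in S}p_{ij}\le\overline{\mathrm{OPT}}_{\lfloor t/K\rfloor}$. Let $0<\mathrm{LB}\le\mathrm{OPT}$. Then the approximation ratio $\rho=f^{LK}/\mathrm{OPT}$ satisfies $$\rho\le\frac{E}{\mathrm{LB}}\cdot\frac{1}{e}+\sum_{u=0}^{L-1}\gamma_u\Big(1+\frac{\sum_{v=1}^uR_v}{\mathrm{LB}}\Big),\qquad \gamma_u=\Big(1-e^{-1/L}\Big)\Big(e^{-1/L}\Big)^{L-1-u}.$$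
   Context: Multi-position greedy algorithm: $\mathbf b^0=\boldsymbol\epsilon$, $A_0=V_1\cup\dots\cup V_L$, $J_l=\emptyset$; at each iteration $t$ choose $j_t\in\arg\min_{j\in A_{t-1}}\sum_i b^{t-1}_ip_{ij}$ with position $l_t$, add $j_t$ to $J_{l_t}$, set $\mathbf b^t=\mathbf b^{t-1}\odot\mathbf p_{j_t}$ (coordinatewise product), and remove $j_t$ from the available set, removing all of $V_{l_t}$ instead if $|J_{l_t}|=K$. It runs $LK$ iterations. $R_v$ bounds the increase of the achievable optimum caused by closing the $v$-th position. $e$ is Euler's number. *)

(* Defs.v *)
From HB Require Import structures.
From mathcomp Require Import all_boot.
From Stdlib Require Import Reals.

Set Implicit Arguments.
Unset Strict Implicit.
Unset Printing Implicit Defensive.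

Definition all_rays (T : finType) (L : nat) (Vs : 'I_L -> {set T}) : {set T} :=
  \bigcup_(l < L) Vs l.

Definition feasible (T : finType) (L K : nat) (Vs : 'I_L -> {set T})
  (J : {set T}) : bool :=
  (J \subset all_rays Vs) && [forall l : 'I_L, #|J :&: Vs l| <= K].

Definition setcost (T : finType) (nV : nat) (p : T -> 'I_nV -> R)
  (J : {set T}) : R :=
  \big[Rplus/0%R]_(i < nV) \big[Rmult/1%R]_(j in J) p j i.

Definition avail (T : finType) (L K : nat) (Vs : 'I_L -> {set T})
  (s : seq T) : {set T} :=
  [set j in all_rays Vs | (j \notin s) &&
     [forall l : 'I_L, (j \in Vs l) ==> (count (fun x => x \in Vs l) s < K)]].

Definition bvec (T : finType) (nV : nat) (eps : 'I_nV -> R)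
  (p : T -> 'I_nV -> R) (s : seq T) (i : 'I_nV) : R :=
  (eps i * \big[Rmult/1%R]_(j <- s) p j i)%R.

Definition score (T : finType) (nV : nat) (eps : 'I_nV -> R)
  (p : T -> 'I_nV -> R) (s : seq T) (j : T) : R :=
  \big[Rplus/0%R]_(i < nV) (bvec eps p s i * p j i)%R.

Definition greedy_run (T : finType) (nV L K : nat) (Vs : 'I_L -> {set T})
  (eps : 'I_nV -> R) (p : T -> 'I_nV -> R) (js : seq T) : Prop :=
  size js = (L * K)%N /\
  forall (s1 : seq T) (j : T) (s2 : seq T), js = s1 ++ j :: s2 ->
    j \in avail K Vs s1 /\
    forall j', j' \in avail K Vs s1 -> (score eps p s1 j <= score eps p s1 j')%R.

Definition final_cost (T : finType) (nV : nat) (eps : 'I_nV -> R)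
  (p : T -> 'I_nV -> R) (js : seq T) : R :=
  \big[Rplus/0%R]_(i < nV) bvec eps p js i.

Definition OPTbar (OPT : R) (Rs : nat -> R) (u : nat) : R :=
  (OPT + \big[Rplus/0%R]_(1 <= v < u.+1) Rs v)%R.

Definition gamma (L u : nat) : R :=
  ((1 - exp (- (1 / INR L))) * pow (exp (- (1 / INR L))) (L - 1 - u))%R.

(* Main.v *)
Require Import Defs.
From HB Require Import structures.
From mathcomp Require Import all_boot.
From Stdlib Require Import Reals.
From Stdlib Require Import Lra Lia.
From mathcomp Require Import zify.

Set Implicit Arguments.
Unset Strict Implicit.
Unset Printing Implicit Defensive.

Local Open Scope R_scope.

HB.instance Definition _ := Monoid.isComLaw.Build R 0 Rplus (fun a b c => esym (Rplus_assoc a b c)) Rplus_comm Rplus_0_l.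
HB.instance Definition _ := Monoid.isComLaw.Build R 1 Rmult (fun a b c => esym (Rmult_assoc a b c)) Rmult_comm Rmult_1_l.
HB.instance Definition _ := Monoid.isMulLaw.Build R 0 Rmult Rmult_0_l Rmult_0_r.
HB.instance Definition _ := Monoid.isAddLaw.Build R Rmult Rplus Rmult_plus_distr_r Rmult_plus_distr_l.

Lemma sum_le (I : Type) (r : seq I) (P : pred I) (F G : I -> R) :
  (forall i, P i -> F i <= G i) ->
  \big[Rplus/0]_(i <- r | P i) F i <= \big[Rplus/0]_(i <- r | P i) G i.
Proof.
move=> h; apply: (big_ind2 (fun x y => x <= y)) => //; first lra.
by move=> a b c d; lra.
Qed.

Lemma sum_ge0 (I : Type) (r : seq I) (P : pred I) (F : I -> R) :
  (forall i, P i -> 0 <= F i) -> 0 <= \big[Rplus/0]_(i <- r | P i) F i.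
Proof.
move=> h; apply: (big_ind (fun x => 0 <= x)) => //; first lra.
by move=> a b; lra.
Qed.

Lemma prod01 (I : Type) (r : seq I) (P : pred I) (F : I -> R) :
  (forall i, P i -> 0 <= F i <= 1) -> 0 <= \big[Rmult/1]_(i <- r | P i) F i <= 1.
Proof.
move=> h; apply: (big_ind (fun x => 0 <= x <= 1)) => //; first lra.
by move=> a b ha hb; nra.
Qed.

Lemma sum_const_R (A : finType) (S : {set A}) (a : R) :
  \big[Rplus/0]_(j in S) a = INR #|S| * a.
Proof.
rewrite big_const; elim: #|S| => [|n IH]; first by rewrite /=; lra.
rewrite iterS IH S_INR. lra.
Qed.

Lemma union_bound_seq (I : Type) (r : seq I) (x : I -> R) :
  (forall i, 0 <= x i <= 1) ->
  \big[Rplus/0]_(j <- r) x j + 1 <= INR (size r) + \big[Rmult/1]_(j <- r) x j.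
Proof.
move=> h; elim: r => [|a r IH]; first by rewrite !big_nil /=; lra.
rewrite !big_cons [size _]/= S_INR.
have hp := @prod01 I r xpredT x (fun i _ => h i).
have ha := h a. nra.
Qed.

Lemma union_bound (A : finType) (S : {set A}) (x : A -> R) :
  (forall i, 0 <= x i <= 1) ->
  \big[Rplus/0]_(j in S) x j + 1 <= INR #|S| + \big[Rmult/1]_(j in S) x j.
Proof.
move=> h; rewrite -!big_enum cardE; exact: union_bound_seq.
Qed.

Lemma pow_exp (x : R) (n : nat) : exp x ^ n = exp (INR n * x).
Proof.
elim: n => [|n IH]; first by rewrite /= Rmult_0_l exp_0.
rewrite S_INR /= IH -exp_plus; f_equal; lra.
Qed.

Local Close Scope R_scope.

Theorem theorem3 (T : finType) (nV L K : nat) (Vs : 'I_L -> {set T})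
  (p : T -> 'I_nV -> R) (eps : 'I_nV -> R) (Rs : nat -> R)
  (OPT LB : R) (js : seq T) :
  (0 < L)%N -> (0 < K)%N ->
  (forall l1 l2 : 'I_L, l1 != l2 -> [disjoint Vs l1 & Vs l2]) ->
  (forall l : 'I_L, K <= #|Vs l|)%N ->
  (forall j i, 0 <= p j i <= 1)%R ->
  (forall i, 0 <= eps i <= 1)%R ->
  (* OPT is the minimum over feasible J *)
  (exists J : {set T}, feasible K Vs J /\ setcost p J = OPT) ->
  (forall J : {set T}, feasible K Vs J -> (OPT <= setcost p J)%R) ->
  (0 < OPT)%R ->
  (forall v, (1 <= v)%N -> (v <= L - 1)%N -> (0 <= Rs v)%R) ->
  greedy_run K Vs eps p js ->
  (forall t, (t < L * K)%N ->
     exists S : {set T}, S \subset avail K Vs (take t js) /\ S != set0 /\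
       (#|S| <= L * K)%N /\ (setcost p S <= OPTbar OPT Rs (t %/ K))%R) ->
  (0 < LB)%R -> (LB <= OPT)%R ->
  (final_cost eps p js / OPT <=
     (\big[Rplus/0%R]_(i < nV) eps i) / LB * (1 / exp 1) +
     \big[Rplus/0%R]_(u < L)
        (gamma L u * (1 + (\big[Rplus/0%R]_(1 <= v < u.+1) Rs v) / LB)))%R.
Proof.
Local Open Scope R_scope.
move=> L0 K0 _ _ hp heps _ _ opt0 hRs [hsize hgr] hS LB0 LBle.
pose N := INR (L * K).
pose q := 1 - 1 / N.
pose c := fun u => OPTbar OPT Rs u.
pose f := fun t => final_cost eps p (take t js).
have hN1 : 1 <= N.
  rewrite /N; change 1 with (INR 1); apply: le_INR; apply/leP; lia.
have hb : forall s i, 0 <= bvec eps p s i <= 1.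
  move=> s i; rewrite /bvec.
  have := @prod01 T s xpredT (fun j => p j i) (fun j _ => hp j i).
  have := heps i; nra.
have hq0 : 0 <= q.
  rewrite /q; have : 1 / N <= 1; last lra.
  rewrite /Rdiv Rmult_1_l -Rinv_1; apply: Rinv_le_contravar; lra.
have hstep : forall t : nat, (t < L * K)%nat -> f t.+1 <= f t /\
   (c (t %/ K) <= f t -> f t.+1 - c (t %/ K) <= q * (f t - c (t %/ K))).
  move=> t ht.
  have hsz : (t < size js)%nat by rewrite hsize.
  case hd: (drop t js) => [|j s2].
    by have := size_drop t js; rewrite hd /=; lia.
  have hn := drop_nth j hsz; rewrite hd in hn; case: hn => hj _.
  have htk := take_nth j hsz; rewrite -hj in htk.
  have hjs : js = take t js ++ j :: s2 by rewrite -hd cat_take_drop.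
  have [javail jmin] := hgr _ _ _ hjs.
  have hf1 : f t.+1 = score eps p (take t js) j.
    rewrite /f /final_cost htk /score; apply: eq_bigr => i _.
    by rewrite /bvec -cats1 big_cat big_seq1 Rmult_assoc.
  have hmono : f t.+1 <= f t.
    rewrite hf1 /score /f /final_cost; apply: sum_le => i _.
    have := hb (take t js) i; have := hp j i; nra.
  split => // hc.
  have [S [sub [ne [cardS cS]]]] := hS t ht.
  pose n := INR #|S|.
  have hn1 : 1 <= n.
    rewrite /n; change 1 with (INR 1); apply: le_INR; apply/leP.
    by rewrite card_gt0.
  have hnN : n <= N.
    rewrite /n /N; apply: le_INR; apply/leP; exact: cardS.
  have key : n * score eps p (take t js) j <=
             (n - 1) * f t + setcost p S.
    rewrite /n -sum_const_R.
    apply: (Rle_trans _ (\big[Rplus/0]_(j' in S) score eps p (take t js) j')).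
      apply: sum_le => j' hj'; apply: jmin; exact: (subsetP sub).
    rewrite /score exchange_big /= /f /final_cost /setcost big_distrr -big_split /=.
    apply: sum_le => i _.
    rewrite -big_distrr /=.
    have hu := @union_bound T S (fun j' => p j' i) (fun j' => hp j' i).
    have hpr := @prod01 T (index_enum T) (fun j' => j' \in S) (fun j' => p j' i) (fun j' _ => hp j' i).
    have hbi := hb (take t js) i.
    rewrite /n in hu *; nra.
  rewrite -hf1 in key.
  have h1 : f t.+1 - c (t %/ K) <= (1 - 1 / n) * (f t - c (t %/ K)).
    apply: (Rmult_le_reg_l n); first lra.
    have -> : n * ((1 - 1 / n) * (f t - c (t %/ K))) = (n - 1) * (f t - c (t %/ K)).
      field; lra.
    rewrite /c; lra.
  have h2 : 1 / N <= 1 / n.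
    rewrite /Rdiv !Rmult_1_l; apply: Rinv_le_contravar; lra.
  rewrite /q; nra.
have hblock : forall u : nat, (u < L)%nat -> forall k : nat, (k <= K)%nat ->
   (f (u * K + k)%nat <= f (u * K)%nat) /\
   (c u <= f (u * K)%nat -> f (u * K + k)%nat - c u <= q ^ k * (f (u * K)%nat - c u)).
  move=> u hu; elim=> [|k IH] hk.
    rewrite addn0; split; first lra.
    move=> _ /=; lra.
  have [IH1 IH2] := IH (ltnW hk).
  have ht : (u * K + k < L * K)%nat.
    apply: (@leq_trans (u * K + K)); first by rewrite ltn_add2l.
    by rewrite -mulSnr leq_mul2r hu orbT.
  have [s1 s2] := hstep _ ht.
  have hdiv : ((u * K + k) %/ K)%nat = u by rewrite divnMDl // divn_small // addn0.
  rewrite hdiv in s2.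
  rewrite addnS; split; first lra.
  move=> hc.
  have hqk : 0 <= q ^ k by apply: pow_le.
  case: (Rle_lt_dec (c u) (f (u * K + k)%nat)) => hc2.
    have := s2 hc2; have := IH2 hc; rewrite [q ^ k.+1]/=; nra.
  rewrite [q ^ k.+1]/=.
  have : 0 <= q * (q ^ k * (f (u * K)%nat - c u)) by apply: Rmult_le_pos => //; apply: Rmult_le_pos; lra.
  lra.
pose s := exp (- (1 / INR L)).
have hL : 0 < INR L by apply: lt_0_INR; apply/ltP.
have hK : 0 < INR K by apply: lt_0_INR; apply/ltP.
have hNLK : N = INR L * INR K by exact: mult_INR.
have hs0 : 0 < s by apply: exp_pos.
have hs1 : s <= 1.
  have ha : 1 <= exp (1 / INR L).
    have := exp_ineq1_le (1 / INR L).
    have : 0 <= 1 / INR L by apply: Rlt_le; apply: Rdiv_lt_0_compat; lra.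
    lra.
  have := Rinv_le_contravar _ _ Rlt_0_1 ha; rewrite Rinv_1 /s exp_Ropp; lra.
have hqK : q ^ K <= s.
  apply: (Rle_trans _ (exp (- (1 / N)) ^ K)).
    apply: pow_incr; split => //.
    have := exp_ineq1_le (- (1 / N)); rewrite /q; lra.
  rewrite pow_exp /s; right; f_equal; rewrite hNLK; field; lra.
have hg : forall u : nat, (u < L)%nat ->
    f (u.+1 * K)%nat <= s * f (u * K)%nat + (1 - s) * c u.
  move=> u hu.
  have [b1 b2] := hblock u hu K (leqnn K).
  rewrite mulSnr.
  case: (Rle_lt_dec (c u) (f (u * K)%nat)) => hc.
    have := b2 hc.
    have : q ^ K * (f (u * K)%nat - c u) <= s * (f (u * K)%nat - c u).
      apply: Rmult_le_compat_r; lra.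
    lra.
  nra.
have hE : f 0%nat = \big[Rplus/0]_(i < nV) eps i.
  rewrite /f take0 /final_cost; apply: eq_bigr => i _.
  by rewrite /bvec big_nil Rmult_1_r.
have hunr : forall u : nat, (u <= L)%nat ->
   f (u * K)%nat <= s ^ u * \big[Rplus/0]_(i < nV) eps i +
     \big[Rplus/0]_(w < u) ((1 - s) * s ^ (u - 1 - w) * c w).
  elim=> [|u IH] hu.
    rewrite mul0n hE big_ord0 /=; lra.
  have := hg u hu; have := IH (ltnW hu).
  rewrite big_ord_recr /=.
  have -> : (u.+1 - 1 - u = 0)%nat by lia.
  have -> : \big[Rplus/0]_(i < u) ((1 - s) * s ^ (u.+1 - 1 - i) * c i) =
            s * \big[Rplus/0]_(i < u) ((1 - s) * s ^ (u - 1 - i) * c i).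
    rewrite big_distrr /=; apply: eq_bigr => i _.
    have hi := ltn_ord i.
    have -> : (u.+1 - 1 - i = (u - 1 - i).+1)%nat by lia.
    rewrite [s ^ (_.+1)]/=; ring.
  move=> h1 h2; rewrite [s ^ 0]/=.
  have := Rmult_le_compat_l s _ _ (Rlt_le _ _ hs0) h1.
  rewrite Rmult_plus_distr_l -Rmult_assoc Rmult_1_r.
  move=> h3; set A := \big[Rplus/0]_(i < nV) eps i in h3 *. set B := \big[Rplus/0]_(i < u) _ in h3 *. lra.
have hfin := hunr L (leqnn L).
rewrite /f take_oversize in hfin; last by rewrite hsize.
have hsL : s ^ L = 1 / exp 1.
  rewrite /s pow_exp.
  have -> : INR L * - (1 / INR L) = - 1 by field; lra.
  by rewrite exp_Ropp /Rdiv Rmult_1_l.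
rewrite hsL in hfin.
set E := \big[Rplus/0]_(i < nV) eps i in hfin *.
have hE0 : 0 <= E by apply: sum_ge0 => i _; have := heps i; lra.
have hsum : \big[Rplus/0]_(w < L) ((1 - s) * s ^ (L - 1 - w) * c w) <=
   OPT * \big[Rplus/0]_(u < L)
        (gamma L u * (1 + (\big[Rplus/0]_(1 <= v < u.+1) Rs v) / LB)).
  rewrite big_distrr; apply: sum_le => w _.
  have hw := ltn_ord w.
  have hR : 0 <= \big[Rplus/0]_(1 <= v < w.+1) Rs v.
    rewrite big_seq; apply: sum_ge0 => v; rewrite mem_index_iota => /andP [h1 h2].
    apply: hRs => //; lia.
  set Rw := \big[Rplus/0]_(1 <= v < w.+1) Rs v in hR *.
  have hRle : Rw <= OPT * (Rw / LB).
    have -> : OPT * (Rw / LB) = Rw + Rw * (OPT - LB) * / LB by field; lra.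
    have : 0 <= Rw * (OPT - LB) * / LB.
      apply: Rmult_le_pos; last by apply: Rlt_le; apply: Rinv_0_lt_compat.
      apply: Rmult_le_pos; lra.
    lra.
  have hgam : 0 <= (1 - s) * s ^ (L - 1 - w).
    apply: Rmult_le_pos; first lra. apply: pow_le; lra.
  change (gamma L w) with ((1 - s) * s ^ (L - 1 - w)).
  rewrite /c /OPTbar -/Rw.
  rewrite -[X in _ <= X]/(OPT * ((1 - s) * s ^ (L - 1 - w) * (1 + Rw / LB))).
  nra.
have hEt : 1 / exp 1 * E <= OPT * (E / LB * (1 / exp 1)).
  have he : 0 < 1 / exp 1 by apply: Rdiv_lt_0_compat; [lra | apply: exp_pos].
  have hEle : E <= OPT * (E / LB).
    have -> : OPT * (E / LB) = E + E * (OPT - LB) * / LB by field; lra.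
    have : 0 <= E * (OPT - LB) * / LB.
      apply: Rmult_le_pos; last by apply: Rlt_le; apply: Rinv_0_lt_compat.
      apply: Rmult_le_pos; lra.
    lra.
  nra.
apply: (Rmult_le_reg_l OPT) => //.
have -> : OPT * (final_cost eps p js / OPT) = final_cost eps p js by field; lra.
set G := \big[Rplus/0]_(w < L) ((1 - s) * s ^ (L - 1 - w) * c w) in hsum hfin.
set H := \big[Rplus/0]_(u < L)
        (gamma L u * (1 + (\big[Rplus/0]_(1 <= v < u.+1) Rs v) / LB)) in hsum *.
rewrite Rmult_plus_distr_l.
lra.
Qed.
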